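(* If $a,b$ are integers with $a>1$ and $b>1$, then \[\overline{p}(a)\,\overline{p}(b)>\overline{p}(a+b).\]
   Context: An overpartition of a nonnegative integer $n$ is a partition of $n$ in which the first occurrence of each distinct part may be overlined. $\overline{p}(n)$ denotes the number of overpartitions of $n$. *)

(* Defs.v *)
From mathcomp Require Import all_boot.
Set Implicit Arguments. Unset Strict Implicit. Unset Printing Implicit Defensive.

Fixpoint seqs_of_size (T : Type) (A : seq T) (m : nat) : seq (seq T) :=
  if m is m'.+1 then [seq x :: s | x <- A, s <- seqs_of_size A m'] else [:: [::]].

(* An overpartition of n, written as the list of its parts in nonincreasing
   order; each part is a pair (k, overlined?).  Conditions: parts are
   positive, they sum to n, they are listed in nonincreasing order, and only
   the first occurrence of a part value may carry the overline. *)
Definition is_overpartition (n : nat) (s : seq (nat * bool)) : bool :=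
  [&& all (fun x => 0 < x.1) s,
      sumn (map fst s) == n,
      sorted geq (map fst s) &
      all (fun i => (nth (0, false) s i).2 ==>
                    (index (nth (0, false) s i).1 (map fst s) == i))
          (iota 0 (size s))].

(* Every overpartition of n has at most n parts, each in [1, n]; the
   candidate list below enumerates each such sequence exactly once. *)
Definition overpartition_candidates (n : nat) : seq (seq (nat * bool)) :=
  flatten [seq seqs_of_size [seq (k, b) | k <- iota 1 n, b <- [:: true; false]] m
          | m <- iota 0 n.+1].

Definition overpartition_count (n : nat) : nat :=
  count (is_overpartition n) (overpartition_candidates n).

(* Main.v *)
Require Import Defs.
From mathcomp Require Import all_boot.
From mathcomp Require Import zify.
Set Implicit Arguments. Unset Strict Implicit. Unset Printing Implicit Defensive.

Section Gen.
Variables (S U R : eqType) (f : S -> U -> R).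
Hypothesis finj : forall x y x' y', f x y = f x' y' -> x = x' /\ y = y'.

Lemma mem_fpairs (s : seq S) (t : S -> seq U) x y :
  (f x y \in [seq f x y | x <- s, y <- t x]) = (x \in s) && (y \in t x).
Proof.
apply/allpairsPdep/andP => [[x' [y' [H1 H2 /finj [E1 E2]]]]|[H1 H2]].
  by subst; split.
by exists x, y.
Qed.

Lemma uniq_fpairs (s : seq S) (t : S -> seq U) :
  uniq s -> (forall x, x \in s -> uniq (t x)) ->
  uniq [seq f x y | x <- s, y <- t x].
Proof.
elim: s => //= x s IH /andP [xs us] ut.
rewrite cat_uniq IH ?andbT; last by move=> z zs; apply: ut; rewrite inE zs orbT.
  rewrite map_inj_uniq; last by move=> y1 y2 /finj [].
  apply/andP; split; first by apply: ut; rewrite inE eqxx.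
  apply/hasPn => z /allpairsPdep [x' [y' [H1 H2 ->]]].
  apply/negP => /mapP [y'' _ /finj [E _]]; subst.
  by rewrite H1 in xs.
done.
Qed.
End Gen.

Lemma uniq_flatten_map (T U : eqType) (L : T -> seq U) (s : seq T) :
  uniq s -> (forall m, uniq (L m)) ->
  (forall m m' x, x \in L m -> x \in L m' -> m = m') ->
  uniq (flatten (map L s)).
Proof.
move=> us uL dis; elim: s us => //= x s IH /andP [xs us].
rewrite cat_uniq uL IH // andbT /=.
apply/hasPn => z /flatten_mapP [m ms zm]; apply/negP => zx.
by have E := dis _ _ _ zm zx; subst; rewrite ms in xs.
Qed.

Fixpoint ovt (p : nat) (s : seq (nat * bool)) : bool :=
  if s is x :: t then [&& 0 < x.1, x.1 <= p, x.2 ==> (x.1 < p) & ovt x.1 t] else true.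

Definition heads p n : seq (nat * bool) :=
  [seq (v, o) | v <- iota 1 (minn p n), o <- (if v < p then [:: true; false] else [:: false])].

Fixpoint genk k p n : seq (seq (nat * bool)) :=
  if k is k'.+1 then
    (if n == 0 then [:: [::]] else [::]) ++
    [seq x :: y | x <- heads p n, y <- genk k' x.1 (n - x.1)]
  else (if n == 0 then [:: [::]] else [::]).

Lemma pair_inj (A B : Type) (x : A) (y : B) x' y' : (x, y) = (x', y') -> x = x' /\ y = y'.
Proof. by case. Qed.
Lemma cons_inj (A : Type) (x : A) y x' y' : x :: y = x' :: y' -> x = x' /\ y = y'.
Proof. by case. Qed.

Lemma mem_heads p n x :
  (x \in heads p n) = [&& 0 < x.1, x.1 <= minn p n & x.2 ==> (x.1 < p)].
Proof.
case: x => v o; rewrite /heads (mem_fpairs (@pair_inj _ _)) mem_iota /=.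
case: (v < p); case: o => /=; rewrite ?inE /=; lia.
Qed.

Lemma uniq_heads p n : uniq (heads p n).
Proof.
apply: uniq_fpairs; first exact: pair_inj.
  exact: iota_uniq.
by move=> v _; case: (v < p).
Qed.

Lemma uniq_genk k p n : uniq (genk k p n).
Proof.
elim: k p n => [|k IH] p n /=; first by case: (n == 0).
rewrite cat_uniq; apply/and3P; split.
- by case: (n == 0).
- apply/hasPn => s /allpairsPdep [x [y [_ _ ->]]].
  by case: (n == 0).
- apply: uniq_fpairs; first exact: cons_inj.
  exact: uniq_heads.
  by move=> x _; exact: IH.
Qed.

Lemma mem_genk k p n s : n <= k ->
  (s \in genk k p n) = ovt p s && (sumn (map fst s) == n).
Proof.
elim: k p n s => [|k IH] p n s hn /=.
  have -> : n = 0 by lia.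
  case: s => [|x t] /=; first by rewrite inE.
  rewrite inE /=; apply/idP/idP => [//|/andP [/and4P [h1 _ _ _] /eqP]]; lia.
rewrite mem_cat; case: s => [|x t] /=.
  have -> : ([::] \in [seq x :: y | x <- heads p n, y <- genk k x.1 (n - x.1)]) = false.
    by apply/negP => /allpairsPdep [x [y [_ _ //]]].
  by rewrite orbF; case: eqP => [->|/eqP]; rewrite ?inE // eq_sym => /negbTE ->.
have -> : ((x :: t) \in (if n == 0 then [:: [::]] else [::])) = false.
  by case: (n == 0).
rewrite /= (mem_fpairs (@cons_inj _)) mem_heads.
case h0: (0 < x.1) => /=; last by [].
case hx: (x.1 <= minn p n) => /=.
  rewrite IH; last by move: hx h0; rewrite leq_min => /andP [_ ?] ?; lia.
  have hp : x.1 <= p by move: hx; rewrite leq_min => /andP [].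
  rewrite hp /=.
  case: (x.2 ==> (x.1 < p)); case: (ovt x.1 t); rewrite /= ?andbF //.
  apply/eqP/eqP; lia.
apply/esym/negbTE/negP => /andP [/and3P [hp _ _] /eqP hs].
move: hx; rewrite leq_min hp /=; move/negbT; lia.
Qed.

Lemma size_genkS k p n : size (genk k.+1 p n) =
  (n == 0) + \sum_(1 <= v < (minn p n).+1) (if v < p then 2 else 1) * size (genk k v (n - v)).
Proof.
rewrite /= size_cat; congr (_ + _); first by case: (n == 0).
rewrite size_allpairs_dep sumnE big_map /heads big_allpairs_dep /=.
rewrite /index_iota subSS subn0; apply: eq_bigr => v _.
by case: (v < p); rewrite !big_cons big_nil /=; lia.
Qed.

Definition N p n := size (genk n p n).

Lemma size_genk_fuel k p n : n <= k -> size (genk k p n) = N p n.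
Proof.
move=> hk; apply: perm_size; apply: uniq_perm; try exact: uniq_genk.
by move=> s; rewrite !mem_genk.
Qed.

Lemma N_rec p n : N p n =
  (n == 0) + \sum_(1 <= v < (minn p n).+1) (if v < p then 2 else 1) * N v (n - v).
Proof.
case: n => [|n]; first by rewrite /N /= big_geq.
rewrite /N size_genkS; congr (_ + _).
rewrite big_nat_cond [RHS]big_nat_cond; apply: eq_bigr => v /andP [/andP [h1 _] _].
by rewrite size_genk_fuel //; lia.
Qed.

Definition Qd (s : seq (nat * bool)) : bool :=
  all (fun i => (nth (0, false) s i).2 ==>
                    (index (nth (0, false) s i).1 (map fst s) == i))
          (iota 0 (size s)).

Lemma all_iota_nth (T : Type) (d : T) (P : T -> bool) (R : nat -> bool) (t : seq T) :
  all (fun j => P (nth d t j) && R j) (iota 0 (size t)) =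
  all (fun j => R j) (iota 0 (size t)) && all P t.
Proof.
apply/idP/andP => [/allP H|[/allP H1 /all_nthP H2]].
  split; first by apply/allP => j /H /andP [].
  by apply/(all_nthP d) => j hj; move: (H j); rewrite mem_iota add0n hj => /(_ isT) /andP [].
apply/allP => j hj; rewrite H1 // andbT; apply: H2.
by move: hj; rewrite mem_iota.
Qed.

Lemma Qd_cons x t : Qd (x :: t) = Qd t && all (fun y => y.2 ==> (y.1 != x.1)) t.
Proof.
rewrite /Qd /= eqxx implybT /=.
rewrite -[1]/(1 + 0) iotaDl all_map.
have -> : all (preim (addn 1) (fun i => (nth (0, false) (x :: t) i).2 ==>
            (index (nth (0, false) (x :: t) i).1 (x.1 :: [seq i.1 | i <- t]) == i)))
          (iota 0 (size t)) =
     all (fun j => ((nth (0,false) t j).2 ==> ((nth (0,false) t j).1 != x.1)) &&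
         ((nth (0, false) t j).2 ==> (index (nth (0, false) t j).1 [seq i.1 | i <- t] == j)))
         (iota 0 (size t)).
  apply: eq_all => j /=; rewrite add0n add1n.
  case: (nth (0, false) t j) => v o /=.
  case: o => //=; rewrite [v == x.1]eq_sym; case: (x.1 == v) => //=.
by rewrite (all_iota_nth (0,false) (fun y => y.2 ==> (y.1 != x.1))
  (fun j => (nth (0, false) t j).2 ==> (index (nth (0, false) t j).1 [seq i.1 | i <- t] == j))).
Qed.

Lemma geq_trans : transitive geq.
Proof. by move=> a b c /= h1 h2; apply: leq_trans h2 h1. Qed.

Lemma ovt_iff p s : ovt p s = [&& all (fun x => 0 < x.1 <= p) s, sorted geq (map fst s),
   Qd s & all (fun x => x.2 ==> (x.1 < p)) s].
Proof.
elim: s p => [|x t IH] p //=.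
rewrite IH Qd_cons.
have -> : path geq x.1 [seq i.1 | i <- t] =
          all (fun y => y.1 <= x.1) t && sorted geq [seq i.1 | i <- t].
  by rewrite (path_sortedE geq_trans) all_map.
apply/idP/idP.
- move=> /and5P [h1 h2 h3 h4 /and3P [h5 h6 h7]].
  have hle : all (fun y => y.1 <= x.1) t by apply/allP => y /(allP h4) /andP [].
  apply/and5P; split.
  + rewrite h1 h2 /=; apply/allP => y hy; move: (allP h4 y hy) => /andP [a b]; rewrite a /=; lia.
  + by rewrite hle h5.
  + rewrite h6 /=; apply/allP => y hy; move: (allP h7 y hy); case: y.2 => //=; lia.
  + exact: h3.
  + apply/allP => y hy; move: (allP h7 y hy); case: y.2 => //=; lia.
- move=> /and5P [/andP [/andP [h1 h2] h3] /andP [hle h5] /andP [h6 h7] h8 h9].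
  apply/and5P; split => //.
  + apply/allP => y hy; move: (allP h3 y) (allP hle y); rewrite hy => /(_ isT) /andP [a b] /(_ isT).
    by rewrite a.
  + rewrite h5 h6 /=.
    apply/allP => y hy; move: (allP h7 y) (allP hle y); rewrite hy => /(_ isT) + /(_ isT).
    case: y.2 => //=; lia.
Qed.

Lemma sumn_ge (s : seq nat) x : x \in s -> x <= sumn s.
Proof.
elim: s => //= y s IH; rewrite inE => /orP [/eqP ->|/IH]; lia.
Qed.

Lemma isop_iff n s : is_overpartition n s = ovt n.+1 s && (sumn (map fst s) == n).
Proof.
rewrite /is_overpartition ovt_iff -/(Qd s).
apply/idP/idP.
- move=> /and4P [h1 /eqP h2 h3 h4]; rewrite h3 h4 h2 eqxx /= andbT; apply/andP; split.
  + apply/allP => y hy; rewrite (allP h1 y hy) /=.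
    have : y.1 \in map fst s by apply: map_f.
    move/sumn_ge; rewrite h2 => h; exact: leqW.
  + apply/allP => y hy; case: y.2 => //=.
    have : y.1 \in map fst s by apply: map_f.
    move/sumn_ge; rewrite h2 => h; exact: h.
- move=> /andP [H h5]; move: H => /and4P [h1 h2 h3 h4]; rewrite h5 h2 h3 /= andbT.
  by apply/allP => y /(allP h1) /andP [].
Qed.

Lemma mem_seqs (T : eqType) (A : seq T) m s :
  (s \in seqs_of_size A m) = (size s == m) && all (mem A) s.
Proof.
elim: m s => [|m IH] [|x t] //=.
- apply/negP => /allpairsPdep [x [y [_ _ //]]].
- by rewrite (mem_fpairs (@cons_inj _)) IH eqSS andbCA.
Qed.

Lemma uniq_seqs (T : eqType) (A : seq T) m : uniq A -> uniq (seqs_of_size A m).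
Proof.
move=> uA; elim: m => [|m IH] //=.
by apply: (uniq_fpairs (@cons_inj _)).
Qed.

Definition candA n : seq (nat * bool) :=
  [seq (k, b) | k <- iota 1 n, b <- [:: true; false]].

Lemma uniq_cand n : uniq (overpartition_candidates n).
Proof.
rewrite /overpartition_candidates; apply: uniq_flatten_map.
- exact: iota_uniq.
- move=> m; apply: uniq_seqs; apply: (uniq_fpairs (@pair_inj _ _)) => //; exact: iota_uniq.
- by move=> m m' x; rewrite !mem_seqs => /andP [/eqP <- _] /andP [/eqP <- _].
Qed.

Lemma size_le_sumn (s : seq (nat * bool)) : all (fun x => 0 < x.1) s -> size s <= sumn (map fst s).
Proof. elim: s => //= x t IH /andP [h1 h2]; move: (IH h2); lia. Qed.

Lemma isop_cand n s : is_overpartition n s -> s \in overpartition_candidates n.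
Proof.
move=> H; move: (H); rewrite /is_overpartition => /and4P [h1 /eqP h2 _ _].
apply/flatten_mapP; exists (size s).
  rewrite mem_iota /=; move: (size_le_sumn h1); rewrite h2; lia.
rewrite mem_seqs eqxx /=; apply/allP => x hx.
case: x hx => v o hx.
apply/flatten_mapP; exists v; last by case: o {hx}; rewrite !inE eqxx ?orbT.
rewrite mem_iota.
have : v \in map fst s by apply: (map_f fst hx).
move/sumn_ge; rewrite h2 => hv.
move: (allP h1 _ hx) => /= hv0; apply/andP; split => //.
Qed.

Lemma count_eq n : overpartition_count n = N n.+1 n.
Proof.
rewrite /overpartition_count -size_filter /N.
apply: perm_size; apply: uniq_perm.
- exact/filter_uniq/uniq_cand.
- exact: uniq_genk.
- move=> s; rewrite mem_filter mem_genk // -isop_iff.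
  by case H: (is_overpartition n s) => //=; apply: isop_cand.
Qed.

Definition F m x := (x == 0) + \sum_(1 <= v < (minn m x).+1) 2 * N v (x - v).

Lemma NF n : N n.+1 n = F n n.
Proof.
rewrite N_rec /F; congr (_ + _).
have -> : minn n.+1 n = n by lia.
have -> : minn n n = n by lia.
rewrite big_nat_cond [RHS]big_nat_cond; apply: eq_bigr => v /andP [/andP [_ h] _].
by rewrite h.
Qed.

Lemma F0 x : F 0 x = (x == 0).
Proof. by rewrite /F min0n big_geq // addn0. Qed.

Lemma FS m x : F m.+1 x = F m x + (if m.+1 <= x then 2 * N m.+1 (x - m.+1) else 0).
Proof.
rewrite /F -addnA; congr (_ + _).
case: ifP => h.
  have -> : minn m.+1 x = m.+1 by lia.
  have -> : minn m x = m by lia.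
  by rewrite big_nat_recr.
have -> : minn m.+1 x = minn m x by lia.
by rewrite addn0.
Qed.

Lemma NS m y : N m.+1 y = F m y + (if m.+1 <= y then N m.+1 (y - m.+1) else 0).
Proof.
rewrite N_rec /F -addnA; congr (_ + _).
case: ifP => h.
  have -> : minn m.+1 y = m.+1 by lia.
  have -> : minn m y = m by lia.
  rewrite big_nat_recr //= ltnn mul1n; congr (_ + _).
  rewrite big_nat_cond [RHS]big_nat_cond; apply: eq_bigr => v /andP [/andP [_ h2] _].
  by rewrite h2.
have -> : minn m.+1 y = minn m y by lia.
rewrite addn0 big_nat_cond [RHS]big_nat_cond; apply: eq_bigr => v /andP [/andP [_ h2] _].
have -> : v < m.+1 by lia.
done.
Qed.

Lemma Fm0 m : F m 0 = 1.
Proof. by rewrite /F minn0 big_geq. Qed.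

Lemma Nm0 m : N m 0 = 1.
Proof. by rewrite N_rec minn0 big_geq. Qed.

Lemma N1 y : N 1 y = 1.
Proof.
elim: y => [|y IH]; first exact: Nm0.
by rewrite NS F0 /= subn1 /= IH.
Qed.

Lemma F1 x : F 1 x = (if x == 0 then 1 else 2).
Proof. by rewrite FS F0 N1; case: x. Qed.

Lemma N_le_F m y : N m.+1 y <= F m.+1 y.
Proof. rewrite NS FS; case: ifP => _; lia. Qed.

Lemma F_le_N m y : F m y <= N m.+1 y.
Proof. rewrite NS; lia. Qed.

Lemma Ffix1 m t : t <= m -> F m.+1 t = F m t.
Proof. by move=> h; rewrite FS; case: ifP => h2; [lia|rewrite addn0]. Qed.

Lemma Ffix m m' t : t <= m -> m <= m' -> F m t = F m' t.
Proof.
move=> h1 /subnK <-; elim: (m' - m) => [|d IH]; first by rewrite add0n.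
by rewrite addSn Ffix1; [exact: IH | lia].
Qed.

Lemma NS_lt m y : y < m.+1 -> N m.+1 y = F m y.
Proof. by move=> h; rewrite NS; case: ifP => h2; [lia|rewrite addn0]. Qed.

Lemma FS_lt m y : y < m.+1 -> F m.+1 y = F m y.
Proof. by move=> h; rewrite Ffix1 //; lia. Qed.

Lemma mono m : (forall x y, x <= y -> F m.+1 x <= F m.+1 y) /\
               (forall x y, x <= y -> N m.+1 x <= N m.+1 y).
Proof.
elim: m => [|m [IHF IHN]].
  split => x y h; rewrite ?F1 ?N1 //.
  by case: x h => [|x]; case: y => [|y].
have HN : forall x y, x <= y -> N m.+2 x <= N m.+2 y.
  suff H : forall K x y, y <= K -> x <= y -> N m.+2 x <= N m.+2 y.
    by move=> x y; apply: H (leqnn y).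
  elim=> [|K IH] x y hy hxy.
    have hx : x = 0 by lia.
    have hy0 : y = 0 by lia.
    by rewrite hx hy0.
  rewrite (NS _ x) (NS _ y); apply: leq_add; first exact: IHF.
  case: ifP => h1; last by [].
  have h2 : m.+2 <= y := leq_trans h1 hxy.
  rewrite h2; apply: IH; last exact: leq_sub2r.
  by rewrite leq_subLR; apply: leq_trans hy _; rewrite addSn ltnS leq_addl.
split => // x y h; rewrite (FS _ x) (FS _ y); apply: leq_add; first exact: IHF.
case: ifP => h1 //; have -> : m.+2 <= y := leq_trans h1 h.
by rewrite leq_mul2l; apply/orP; right; apply: HN; exact: leq_sub2r.
Qed.

Lemma Fmono m x y : x <= y -> F m.+1 x <= F m.+1 y.
Proof. exact: (mono m).1. Qed.
Lemma Nmono m x y : x <= y -> N m.+1 x <= N m.+1 y.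
Proof. exact: (mono m).2. Qed.
Lemma Fpos m x : 0 < F m.+1 x.
Proof. by have := Fmono m (leq0n x); rewrite Fm0. Qed.
Lemma Npos m x : 0 < N m.+1 x.
Proof. by have := Nmono m (leq0n x); rewrite Nm0. Qed.

Lemma Hsub m K :
  (forall x y, x + y <= K -> F m.+1 (x + y) <= F m.+1 x * F m.+1 y) ->
  forall x y, x + y <= K -> N m.+2 (x + y) <= 2 * N m.+2 x * N m.+2 y.
Proof.
move=> hC.
suff H : forall L x y, x + y <= L -> x + y <= K -> N m.+2 (x + y) <= 2 * N m.+2 x * N m.+2 y.
  by move=> x y hh; exact: (H _ _ _ hh hh).
elim=> [|L IH] x y hL hK.
  have hx : x = 0 by lia.
  have hy : y = 0 by lia.
  by rewrite hx hy Nm0.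
case: (leqP m.+2 x) => hx.
  have E : x + y = (x - m.+2 + y) + m.+2 by lia.
  have e1 : N m.+2 (x + y) = F m.+1 (x + y) + N m.+2 (x - m.+2 + y).
    by rewrite NS ifT; [congr (_ + _); congr (N _ _); lia | lia].
  have e2 : N m.+2 x = F m.+1 x + N m.+2 (x - m.+2) by rewrite NS ifT.
  have i1 : F m.+1 (x + y) <= F m.+1 x * F m.+1 y by apply: hC.
  have i2 : F m.+1 y <= N m.+2 y by apply: F_le_N.
  have i3 : N m.+2 (x - m.+2 + y) <= 2 * N m.+2 (x - m.+2) * N m.+2 y by apply: IH; lia.
  have i4 : F m.+1 x * F m.+1 y <= F m.+1 x * N m.+2 y by rewrite leq_mul2l i2 orbT.
  rewrite e1 e2; nia.
case: (leqP m.+2 y) => hy.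
  have e1 : N m.+2 (x + y) = F m.+1 (x + y) + N m.+2 (x + (y - m.+2)).
    by rewrite NS ifT; [congr (_ + _); congr (N _ _); lia | lia].
  have e2 : N m.+2 y = F m.+1 y + N m.+2 (y - m.+2) by rewrite NS ifT.
  have i1 : F m.+1 (x + y) <= F m.+1 x * F m.+1 y by apply: hC.
  have i2 : F m.+1 x <= N m.+2 x by apply: F_le_N.
  have i3 : N m.+2 (x + (y - m.+2)) <= 2 * N m.+2 x * N m.+2 (y - m.+2) by apply: IH; lia.
  have i4 : F m.+1 x * F m.+1 y <= N m.+2 x * F m.+1 y by rewrite leq_mul2r i2 orbT.
  rewrite e1 e2; nia.
have ex : N m.+2 x = F m.+1 x by apply: NS_lt.
have ey : N m.+2 y = F m.+1 y by apply: NS_lt.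
have i1 : F m.+1 (x + y) <= F m.+1 x * F m.+1 y by apply: hC.
have p1 := Fpos m y.
rewrite ex ey NS.
case: ifP => h.
  rewrite NS_lt; last by lia.
  have i2 : F m.+1 (x + y - m.+2) <= F m.+1 x by apply: Fmono; lia.
  nia.
nia.
Qed.

Lemma H2 m K :
  (forall x y, x + y <= K -> F m (x + y) <= F m x * F m y) ->
  (forall x y, x + y <= K -> F m.+1 (x + y) <= F m.+1 x * F m.+1 y) ->
  forall x y, x < m.+1 -> x + y <= K -> N m.+1 (x + y) <= F m x * N m.+1 y.
Proof.
move=> hC0 hC1 x.
suff H : forall L y, y <= L -> x < m.+1 -> x + y <= K -> N m.+1 (x + y) <= F m x * N m.+1 y.
  by move=> y; apply: H (leqnn y).
elim=> [|L IH] y hL hx hK.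
  have hy : y = 0 by lia.
  rewrite hy addn0 Nm0 muln1 NS_lt //.
case: (leqP m.+1 y) => hy.
  have e1 : N m.+1 (x + y) = F m (x + y) + N m.+1 (x + (y - m.+1)).
    by rewrite NS ifT; [congr (_ + _); congr (N _ _); lia | lia].
  have e2 : N m.+1 y = F m y + N m.+1 (y - m.+1) by rewrite NS ifT.
  have i1 : F m (x + y) <= F m x * F m y by apply: hC0.
  have i3 : N m.+1 (x + (y - m.+1)) <= F m x * N m.+1 (y - m.+1) by apply: IH; lia.
  rewrite e1 e2; nia.
have i0 : N m.+1 (x + y) <= F m.+1 (x + y).
  by rewrite NS FS; case: ifP => _; lia.
have i1 := hC1 x y hK.
rewrite (@FS_lt m x) // (@FS_lt m y) // in i1.
rewrite (@NS_lt m y) //; lia.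
Qed.

Lemma N2 y : N 2 y = y.+1.
Proof.
suff H : forall K y, y <= K -> N 2 y = y.+1 by apply: H (leqnn y).
elim=> [|K IH] {}y hy.
  by have -> : y = 0 by lia; rewrite Nm0.
case: y hy => [|[|y]] hy; first exact: Nm0.
  by rewrite NS F1.
rewrite NS F1 /= subSS ?subn0 IH //; lia.
Qed.

Lemma F2 x : F 2 x = (if x == 0 then 1 else 2 * x).
Proof.
case: x => [|[|x]]; rewrite FS F1 //=.
by rewrite subSS ?subn0 N2; lia.
Qed.

Definition tail m a := 2 * \sum_(t < minn a m) F m t.

Lemma S_lemma n : (forall m x y, x + y < n -> F m (x + y) <= F m x * F m y) ->
  forall m a b, a + b = n -> 0 < a -> a <= b -> m <= b ->
  F m n + tail m a + ((1 < a) && (1 < m)) <= F m a * F m b.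
Proof.
move=> hC; elim=> [|m IH] a b hn ha hab hmb.
  by rewrite !F0 /tail minn0 big_ord0; lia.
case: m IH hmb => [|m] IH hmb.
  rewrite !F1 /tail; have -> : minn a 1 = 1 by lia.
  rewrite big_ord1 F1 /=; case: eqP; case: eqP; case: eqP; lia.
case: m IH hmb => [|m] IH hmb.
  rewrite !F2 /tail.
  case: (leqP 2 a) => h2.
    rewrite big_ord_recr big_ord1 /= !F2 /=.
    have -> : (n == 0) = false by apply/eqP; lia.
    have -> : (a == 0) = false by apply/eqP; lia.
    have -> : (b == 0) = false by apply/eqP; lia.
    nia.
  have ea : a = 1 by lia.
  subst a; rewrite big_ord1 /= !F2 /=.
  have -> : (n == 0) = false by apply/eqP; lia.
  have -> : (b == 0) = false by apply/eqP; lia.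
  nia.
set M := m.+3.
have eFb : F M b = F m.+2 b + 2 * N M (b - M) by rewrite /M FS ifT.
have eFn : F M n = F m.+2 n + 2 * N M (n - M) by rewrite /M FS ifT //; lia.
have hIH := IH a b hn ha hab (ltnW hmb).
case: (ltnP a M) => hA.
- have eFa : F M a = F m.+2 a by rewrite /M FS_lt.
  have etail : tail M a = tail m.+2 a.
    rewrite /tail; have -> : minn a M = a by lia.
    have -> : minn a m.+2 = a by rewrite /M in hA; lia.
    congr (_ * _); apply: eq_bigr => [[t ht]] _ /=; rewrite /M FS_lt //; lia.
  have ebool : ((1 < a) && (1 < M)) = ((1 < a) && (1 < m.+2)) by [].
  have hH2 : N M (a + (b - M)) <= F m.+2 a * N M (b - M).
    apply: (@H2 m.+2 (a + (b - M))) => //.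
    + by move=> x y hxy; apply: hC; lia.
    + by move=> x y hxy; apply: hC; lia.
  have en : n - M = a + (b - M) by lia.
  rewrite eFa eFb eFn etail ebool en.
  nia.
- have eFa : F M a = F m.+2 a + 2 * N M (a - M) by rewrite /M FS ifT.
  have etail : tail M a = tail m.+2 a + 2 * F m.+2 m.+2.
    rewrite /tail; have -> : minn a M = M by lia.
    have -> : minn a m.+2 = m.+2 by rewrite /M in hA; lia.
    rewrite /M big_ord_recr /= mulnDr; congr (_ + _).
      congr (_ * _); apply: eq_bigr => [[t ht]] _ /=; rewrite FS_lt //; lia.
    by rewrite FS_lt.
  have ebool : ((1 < a) && (1 < M)) = ((1 < a) && (1 < m.+2)).
    by rewrite /M /=; have -> : 1 < a by rewrite /M in hA; lia.
  have eN : N M (n - M) = F m.+2 (a - M + b) + N M (a - M + (b - M)).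
    rewrite /M NS ifT; last by rewrite /M in hA hmb; lia.
    by congr (_ + _); [congr (F _ _) | congr (N _ _)]; rewrite /M in hA hmb *; lia.
  have i1 : F m.+2 (a - M + b) <= F m.+2 (a - M) * F m.+2 b by apply: hC; lia.
  have i2 : F m.+2 (a - M) <= N M (a - M) by apply: F_le_N.
  have i3 : N M (a - M + (b - M)) <= 2 * N M (a - M) * N M (b - M).
    by apply: (@Hsub m.+1 (a - M + (b - M))) => // x y hxy; apply: hC; lia.
  have i4 : F m.+2 m.+2 <= F m.+2 a by apply: Fmono; rewrite /M in hA; lia.
  have i5 : 0 < N M (b - M) by apply: Npos.
  have i1' : F m.+2 (a - M) * F m.+2 b <= N M (a - M) * F m.+2 b by rewrite leq_mul2r i2 orbT.
  have i4' : F m.+2 m.+2 <= F m.+2 a * N M (b - M).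
    by apply: leq_trans i4 _; apply: leq_pmulr.
  rewrite eFa eFb eFn etail ebool eN.
  nia.
Qed.

Lemma aux1 (a b d : nat) : a <= b -> a + b - (b + d).+1 < (b + d).+1.
Proof. lia. Qed.

Lemma Ftail a b d : a <= b ->
  F (b + d) (a + b) + 2 * \sum_(t < a + b - (b + d)) F b t =
  F b (a + b) + 2 * \sum_(t < a) F b t.
Proof.
move=> hab; elim: d => [|d IH].
  by rewrite addn0; have -> : a + b - b = a by lia.
rewrite addnS FS; case: ifP => h.
  have ez : a + b - (b + d) = (a + b - (b + d).+1).+1 by lia.
  rewrite ez big_ord_recr /= in IH.
  rewrite NS_lt; last exact: aux1.
  rewrite -(@Ffix b (b + d) (a + b - (b + d).+1)); [|lia|lia].
  move: IH; move: (a + b - (b + d).+1) => z IH.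
  by rewrite -IH mulnDr [2 * _ + 2 * F b z]addnC addnA.
have e1 : a + b - (b + d).+1 = 0 by lia.
have e2 : a + b - (b + d) = 0 by lia.
by rewrite e1 addn0; rewrite e2 in IH.
Qed.

Lemma Cstep n : (forall m x y, x + y < n -> F m (x + y) <= F m x * F m y) ->
  forall m a b, a + b = n -> a <= b -> F m (a + b) <= F m a * F m b.
Proof.
move=> hC m a b hn hab.
case: a hn hab => [|a] hn hab; first by rewrite Fm0 add0n mul1n.
case: (leqP m b) => hmb.
  have := S_lemma hC hn (ltn0Sn a) hab hmb; rewrite hn; lia.
have e := Ftail (m - b) hab.
rewrite (_ : b + (m - b) = m) in e; last by lia.
have hS := S_lemma hC hn (ltn0Sn a) hab (leqnn b).
rewrite /tail in hS; rewrite (_ : minn a.+1 b = a.+1) in hS; last by lia.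
rewrite -(@Ffix b m a.+1) //; last by lia.
rewrite -(@Ffix b m b) //; last by lia.
rewrite hn in e *; lia.
Qed.

Lemma Call n : forall m a b, a + b = n -> F m (a + b) <= F m a * F m b.
Proof.
suff H : forall K n, n <= K -> forall m a b, a + b = n -> F m (a + b) <= F m a * F m b.
  exact: (H n n (leqnn n)).
elim=> [|K IH] {}n hn m a b hab.
  have ha : a = 0 by lia.
  by rewrite ha Fm0 add0n mul1n.
have hC : forall m x y, x + y < n -> F m (x + y) <= F m x * F m y.
  by move=> m' x y hxy; apply: (IH (x + y)) => //; lia.
case: (leqP a b) => h.
  by apply: (Cstep hC).
rewrite addnC mulnC; apply: (Cstep hC); [lia|lia].
Qed.

Theorem main_ineq (a b : nat) (ha : 1 < a) (hb : 1 < b) :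
  overpartition_count (a + b) < overpartition_count a * overpartition_count b.
Proof.
wlog hab : a b ha hb / a <= b.
  move=> W; case: (leqP a b) => h; first exact: W.
  rewrite addnC mulnC; apply: W => //; lia.
rewrite !count_eq !NF.
have e := Ftail a hab.
rewrite (_ : b + a = a + b) in e; last by lia.
rewrite (_ : a + b - (a + b) = 0) in e; last by lia.
rewrite big_ord0 muln0 addn0 in e.
have hS := S_lemma (fun m x y _ => @Call (x + y) m x y (erefl _)) (erefl _) (ltnW ha) hab (leqnn b).
rewrite /tail in hS; rewrite (_ : minn a b = a) in hS; last by lia.
have -> : F a a = F b a by apply: Ffix.
rewrite e; move: hS; rewrite ha hb /=; lia.
Qed.

Theorem theorem1p1 (a b : nat) (ha : 1 < a) (hb : 1 < b) :
  overpartition_count (a + b) < overpartition_count a * overpartition_count b.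
Proof. exact: main_ineq. Qed.
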